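(* Fix a nonempty $A\subseteq S$ and $w\in A$, and let $E_0$ be the event $\{\tau_{\mathcal E_N^w}=\tau_{\mathcal E_N(A)}\}$. Let $x,y\in S$ be distinct with $r(x,y)+r(y,x)>0$. Then there exists $C>0$, independent of $N$ and $i$, such that for all $i\in\{1,\dots,N-1\}$, $$\Big|\mathbb P_{\zeta_i^{x,y}}[E_0]-\frac{r(x,y)}{r(x,y)+r(y,x)}\mathbb P_{\zeta_{i+1}^{x,y}}[E_0]-\frac{r(y,x)}{r(x,y)+r(y,x)}\mathbb P_{\zeta_{i-1}^{x,y}}[E_0]\Big|\le C\frac{d_NN}{i(N-i)}.$$
   Context: $S$ is finite; $r:S\times S\to[0,\infty)$, $r(x,x)=0$, are the rates of an irreducible continuous-time Markov chain on $S$. $\mathcal H_N=\{\eta\in\{0,1,2,\dots\}^S:\sum_x\eta_x=N\}$; $\sigma^{x,y}\eta$ moves one particle from $x$ to $y$ (if $\eta_x\ge1$; else $\sigma^{x,y}\eta=\eta$). With $d_N>0$, $d_N\to0$, the inclusion process is the Markov chain on $\mathcal H_N$ with generator $(\mathcal L_NF)(\eta)=\sum_{x\ne y}\eta_x(d_N+\eta_y)r(x,y)\{F(\sigma^{x,y}\eta)-F(\eta)\}$; $\mathbb P_\eta$ its law from $\eta$; $\tau_{\mathcal C}$ the hitting time of $\mathcal C\subseteq\mathcal H_N$. $\xi_N^z$: all $N$ particles at $z$; $\mathcal E_N^z=\{\xi_N^z\}$, $\mathcal E_N(A)=\bigcup_{z\in A}\mathcal E_N^z$. For $0\le i\le N$,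 $\zeta_i^{x,y}$ is the configuration with $N-i$ particles at $x$, $i$ at $y$, and none elsewhere. *)

(* Defs.v *)
From HB Require Import structures.
From mathcomp Require Import all_boot all_order all_algebra.
From mathcomp Require Import all_classical all_reals all_analysis.
Set Implicit Arguments. Unset Strict Implicit. Unset Printing Implicit Defensive.
Import Order.TTheory GRing.Theory Num.Theory.
Import numFieldNormedType.Exports.
Local Open Scope ring_scope.

Section Inclusion.
Variables (R : realType) (S : finType).

Definition irreducible_rates (r : S -> S -> R) : Prop :=
  forall a b : S, connect (fun u v => 0 < r u v) a b.

Definition sigma (x y : S) (eta : {ffun S -> nat}) : {ffun S -> nat} :=
  if (0 < eta x)%N then
    [ffun z => if z == x then (eta z).-1 else if z == y then (eta z).+1 else eta z]
  else eta.

Definition xi (N : nat) (z : S) : {ffun S -> nat} :=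
  [ffun u => if u == z then N else 0%N].

Definition zeta (N i : nat) (x y : S) : {ffun S -> nat} :=
  [ffun u => if u == x then (N - i)%N else if u == y then i else 0%N].

Definition rate (r : S -> S -> R) (dN : R) (eta : {ffun S -> nat}) (x y : S) : R :=
  (eta x)%:R * (dN + (eta y)%:R) * r x y.

Definition lam (r : S -> S -> R) (dN : R) (eta : {ffun S -> nat}) : R :=
  \sum_(x : S) \sum_(y : S | y != x) rate r dN eta x y.

Definition inE (N : nat) (A : {set S}) (eta : {ffun S -> nat}) : bool :=
  [exists z in A, eta == xi N z].

(* hitP_n eta = P_eta[ tau_{E(A)} <= (n-th jump) and the first visit to E(A) is at xi^w ],
   computed by first-step analysis on the embedded jump chain. *)
Fixpoint hitP_n (r : S -> S -> R) (dN : R) (N : nat) (A : {set S}) (w : S)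
    (n : nat) (eta : {ffun S -> nat}) : R :=
  if eta == xi N w then 1
  else if inE N A eta then 0
  else match n with
       | 0%N => 0
       | n'.+1 => \sum_(x : S) \sum_(y : S | y != x)
                    (rate r dN eta x y / lam r dN eta) *
                    hitP_n r dN N A w n' (sigma x y eta)
       end.

(* P_eta[ tau_{E_N^w} = tau_{E_N(A)} ] (with tau_{E_N(A)} < oo) *)
Definition hitP (r : S -> S -> R) (dN : R) (N : nat) (A : {set S}) (w : S)
    (eta : {ffun S -> nat}) : R :=
  limn (fun n => hitP_n r dN N A w n eta).

End Inclusion.

(* Main.v *)
Require Import Defs.
From HB Require Import structures.
From mathcomp Require Import all_boot all_order all_algebra.
From mathcomp Require Import all_classical all_reals all_analysis.
From mathcomp Require Import ring lra zify.
Import Order.TTheory GRing.Theory Num.Theory.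
Import numFieldNormedType.Exports.
Local Open Scope classical_set_scope.
Local Open Scope ring_scope.

Lemma cvg_sumseq (R : realType) (I : Type) (s : seq I) (P : pred I)
  (f : I -> nat -> R) (l : I -> R) :
  (forall i, f i n @[n --> \oo] --> l i) ->
  (\sum_(i <- s | P i) f i n) @[n --> \oo] --> \sum_(i <- s | P i) l i.
Proof.
move=> H; elim: s => [|i s IH].
  rewrite big_nil; under eq_cvg do rewrite big_nil; exact: cvg_cst.
rewrite big_cons; under eq_cvg do rewrite big_cons.
case: (P i) => //; exact: cvgD.
Qed.

Section H.
Variables (R : realType) (S : finType) (r : S -> S -> R) (dN : R) (N : nat)
  (A : {set S}) (w : S).
Hypothesis r_ge0 : forall a b, 0 <= r a b.
Hypothesis dN_pos : 0 < dN.

Lemma rate_ge0 eta a b : 0 <= rate r dN eta a b.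
Proof.
rewrite /rate; apply: mulr_ge0 => //; apply: mulr_ge0 => //.
by apply: addr_ge0 => //; exact: ltW.
Qed.

Lemma lam_ge0 eta : 0 <= lam r dN eta.
Proof. by apply: sumr_ge0 => a _; apply: sumr_ge0 => b _; exact: rate_ge0. Qed.

Lemma coef_ge0 eta a b : 0 <= rate r dN eta a b / lam r dN eta.
Proof. by apply: divr_ge0; [exact: rate_ge0|exact: lam_ge0]. Qed.

Lemma sum_coef eta :
  \sum_(a : S) \sum_(b : S | b != a) (rate r dN eta a b / lam r dN eta)
  = lam r dN eta / lam r dN eta.
Proof.
rewrite /lam big_distrl /=; apply: eq_bigr => a _; by rewrite big_distrl.
Qed.

Lemma sum_coef_le1 eta :
  \sum_(a : S) \sum_(b : S | b != a) (rate r dN eta a b / lam r dN eta) <= 1.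
Proof.
rewrite sum_coef; have [->|nz] := eqVneq (lam r dN eta) 0.
  by rewrite mul0r.
by rewrite divff.
Qed.

Notation h := (hitP_n r dN N A w).

Lemma h_bnd n eta : 0 <= h n eta <= 1.
Proof.
elim: n eta => [|n IH] eta /=.
  case: (eta == xi N w); first by rewrite ?lexx ?ler01.
  by case: (Defs.inE N A eta); rewrite ?lexx ?ler01.
case: (eta == xi N w); first by rewrite ?lexx ?ler01.
case: (Defs.inE N A eta); first by rewrite ?lexx ?ler01.
apply/andP; split.
  apply: sumr_ge0 => a _; apply: sumr_ge0 => b _.
  by apply: mulr_ge0; [exact: coef_ge0|by case/andP: (IH (sigma a b eta))].
apply: le_trans (sum_coef_le1 eta).
apply: ler_sum => a _; apply: ler_sum => b _.
case/andP: (IH (sigma a b eta)) => _ H1.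
by apply: ler_piMr => //; exact: coef_ge0.
Qed.

Lemma h_mono n eta : h n eta <= h n.+1 eta.
Proof.
elim: n eta => [|n IH] eta.
  rewrite /=; case: (eta == xi N w) => //.
  case: (Defs.inE N A eta) => //.
  apply: sumr_ge0 => a _; apply: sumr_ge0 => b _.
  apply: mulr_ge0; [exact: coef_ge0|by case/andP: (h_bnd 0 (sigma a b eta))].
rewrite [h n.+1 eta]/= [h n.+2 eta]/=.
case: (eta == xi N w) => //.
case: (Defs.inE N A eta) => //.
apply: ler_sum => a _; apply: ler_sum => b _.
by apply: ler_wpM2l; [exact: coef_ge0|exact: IH].
Qed.

Lemma h_cvg eta : h n eta @[n --> \oo] --> hitP r dN N A w eta.
Proof.
have H : h n eta @[n --> \oo] --> sup (range (fun n => h n eta)).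
  apply: nondecreasing_cvgn.
    apply: (homo_leq (r := fun u v : R => u <= v)) => //; [exact: le_trans | move=> i; exact: h_mono].
  exists 1 => _ [n _ <-]; by case/andP: (h_bnd n eta).
by rewrite /hitP (cvg_lim _ H).
Qed.

Lemma hitP_bnd eta : 0 <= hitP r dN N A w eta <= 1.
Proof.
have H := cvgP _ (h_cvg eta).
rewrite /hitP; apply/andP; split.
  apply: limr_ge => //; apply: nearW => n; by case/andP: (h_bnd n eta).
apply: limr_le => //; apply: nearW => n; by case/andP: (h_bnd n eta).
Qed.

Lemma hitP_step eta : eta != xi N w -> ~~ Defs.inE N A eta ->
  hitP r dN N A w eta = \sum_(a : S) \sum_(b : S | b != a)
     (rate r dN eta a b / lam r dN eta) * hitP r dN N A w (sigma a b eta).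
Proof.
move=> H1 H2.
have C1 : h n.+1 eta @[n --> \oo] --> hitP r dN N A w eta.
  by rewrite (cvg_shiftS (fun n => h n eta)); exact: h_cvg.
have C2 : h n.+1 eta @[n --> \oo] --> \sum_(a : S) \sum_(b : S | b != a)
     (rate r dN eta a b / lam r dN eta) * hitP r dN N A w (sigma a b eta).
  have E : (fun n => h n.+1 eta) = (fun n => \sum_(a : S) \sum_(b : S | b != a)
     (rate r dN eta a b / lam r dN eta) * h n (sigma a b eta)).
    by apply: funext => n /=; rewrite (negbTE H1) (negbTE H2).
  rewrite E; apply: cvg_sumseq => a; apply: cvg_sumseq => b.
  apply: cvgMr; exact: h_cvg.
exact: (cvg_unique _ C1 C2).
Qed.
End H.

Lemma divle (R : realFieldType) (n M D D' : R) :
  0 <= n -> n <= M -> 0 < D' -> D' <= D -> n / D <= M / D'.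
Proof.
move=> n0 nM D'0 D'D.
have D0 : 0 < D by apply: lt_le_trans D'D.
apply: le_trans (_ : n / D' <= _).
  apply: ler_wpM2l => //; rewrite lef_pV2 //.
by apply: ler_wpM2r => //; rewrite invr_ge0 ltW.
Qed.

Lemma arith (R : realFieldType) (a b d u v T Q H1 H2 X : R) :
  0 <= a -> 0 <= b -> 0 < a + b -> 0 < d -> 1 <= u -> 1 <= v -> 0 <= T ->
  0 <= Q -> Q <= d * (u + v) * T -> 0 <= H1 <= 1 -> 0 <= H2 <= 1 ->
  0 <= X -> X <= Q / (u * (d + v) * a + v * (d + u) * b + Q) ->
  `| u * (d + v) * a / (u * (d + v) * a + v * (d + u) * b + Q) * H1
   + v * (d + u) * b / (u * (d + v) * a + v * (d + u) * b + Q) * H2 + X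
   - a / (a + b) * H1 - b / (a + b) * H2 |
  <= ((a * b + a * T) / (a + b) ^+ 2 + (a * b + b * T) / (a + b) ^+ 2
      + T / (a + b) + 1) * (d * (u + v) / (v * u)).
Proof.
move=> a0 b0 s0 d0 u1 v1 T0 Q0 QT /andP[H10 H11] /andP[H20 H21] X0 XQ.
set s := a + b in s0 *.
set L := _ + Q in XQ *.
set e := d * (u + v) / (v * u).
have u0 : 0 < u by lra.
have v0 : 0 < v by lra.
have uv0 : 0 < v * u by apply: mulr_gt0.
have Luv : v * u * s <= L.
  rewrite /L /s.
  have : 0 <= d * u * a + d * v * b by apply: addr_ge0; apply: mulr_ge0 => //; apply: mulr_ge0 => //; lra.
  move=> h; nra.
have L0 : 0 < L by apply: lt_le_trans Luv; apply: mulr_gt0.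
have Ls : v * u * s ^+ 2 <= L * s.
  by rewrite expr2 mulrA ler_wpM2r // ltW.
have Ls0 : 0 < v * u * s ^+ 2 by apply: mulr_gt0 => //; apply: exprn_gt0.
set k1 := u * (d + v) * a / L - a / s.
set k2 := v * (d + u) * b / L - b / s.
have E : u * (d + v) * a / L * H1 + v * (d + u) * b / L * H2 + X
   - a / s * H1 - b / s * H2 = k1 * H1 + k2 * H2 + X.
  by rewrite /k1 /k2; ring.
have k1E : k1 = (a * b * d * (u - v) - a * Q) / (L * s).
  rewrite /k1 /L /s; field; apply/andP; split; rewrite -?/s -?/L; apply/eqP; lra.
have k2E : k2 = (a * b * d * (v - u) - b * Q) / (L * s).
  rewrite /k2 /L /s; field; apply/andP; split; rewrite -?/s -?/L; apply/eqP; lra.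
have P0 : 0 <= a * b * d by apply: mulr_ge0; [apply: mulr_ge0|lra].
have Pu : 0 <= a * b * d * u by apply: mulr_ge0 => //; lra.
have Pv : 0 <= a * b * d * v by apply: mulr_ge0 => //; lra.
have aQ0 : 0 <= a * Q by apply: mulr_ge0.
have bQ0 : 0 <= b * Q by apply: mulr_ge0.
have aQ : a * Q <= a * (d * (u + v) * T) by apply: ler_wpM2l.
have bQ : b * Q <= b * (d * (u + v) * T) by apply: ler_wpM2l.
have Ls' : 0 < L * s by apply: mulr_gt0.
have Hk1 : `|k1| <= (a * b + a * T) / s ^+ 2 * e.
  rewrite k1E normrM normfV (gtr0_norm Ls').
  apply: le_trans (@divle _ _ ((a * b + a * T) * (d * (u + v))) _ _ _ _ Ls0 Ls) _ => //.
    by rewrite ler_norml; apply/andP; split; lra.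
  by rewrite /e le_eqVlt; apply/orP; left; apply/eqP; field; rewrite ?(gt_eqF u0) ?(gt_eqF v0) ?(gt_eqF s0) ?(gt_eqF d0).
have Hk2 : `|k2| <= (a * b + b * T) / s ^+ 2 * e.
  rewrite k2E normrM normfV (gtr0_norm Ls').
  apply: le_trans (@divle _ _ ((a * b + b * T) * (d * (u + v))) _ _ _ _ Ls0 Ls) _ => //.
    by rewrite ler_norml; apply/andP; split; lra.
  by rewrite /e le_eqVlt; apply/orP; left; apply/eqP; field; rewrite ?(gt_eqF u0) ?(gt_eqF v0) ?(gt_eqF s0) ?(gt_eqF d0).
have HX : X <= T / s * e.
  apply: le_trans XQ _.
  have Luv' : v * u * s <= L := Luv.
  apply: le_trans (@divle _ _ (d * (u + v) * T) _ _ _ _ _ Luv) _ => //.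
    by apply: mulr_gt0.
  by rewrite /e le_eqVlt; apply/orP; left; apply/eqP; field; rewrite ?(gt_eqF u0) ?(gt_eqF v0) ?(gt_eqF s0) ?(gt_eqF d0).
have e0 : 0 <= e by rewrite /e; apply: divr_ge0; [apply: mulr_ge0; lra|lra].
rewrite E.
have t1 : `|k1 * H1| <= `|k1|.
  by rewrite normrM (ger0_norm H10); apply: ler_piMr.
have t2 : `|k2 * H2| <= `|k2|.
  by rewrite normrM (ger0_norm H20); apply: ler_piMr.
have tri : `|k1 * H1 + k2 * H2 + X| <= `|k1 * H1| + `|k2 * H2| + X.
  apply: le_trans (ler_normD _ _) _.
  by rewrite (ger0_norm X0) lerD2r ler_normD.
have Ce : ((a * b + a * T) / s ^+ 2 + (a * b + b * T) / s ^+ 2 + T / s + 1) * e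
  = (a * b + a * T) / s ^+ 2 * e + (a * b + b * T) / s ^+ 2 * e + T / s * e + e.
  by rewrite !mulrDl mul1r.
rewrite Ce.
move: tri Hk1 Hk2 HX t1 t2.
move: ((a * b + a * T) / s ^+ 2 * e) ((a * b + b * T) / s ^+ 2 * e) (T / s * e) => c1 c2 c3.
move: (`|k1 * H1 + k2 * H2 + X|) (`|k1 * H1|) (`|k2 * H2|) (`|k1|) (`|k2|) => p0 p1 p2 q1 q2 *.
lra.
Qed.

Section Split.
Variables (S : finType) (x y : S).
Definition rest (p : S * S) := [&& p.2 != p.1, p != (x, y) & p != (y, x)].

Lemma split_pairs (R : realType) (F : S -> S -> R) : x != y ->
  \sum_(a : S) \sum_(b : S | b != a) F a b
  = F x y + F y x + \sum_(p | rest p) F p.1 p.2.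
Proof.
move=> xy.
rewrite pair_big_dep /=.
rewrite (bigD1 (x, y)) /=; last by rewrite eq_sym.
rewrite (bigD1 (y, x)) /=; last first.
  by rewrite xy /=; apply/negP => /eqP [e _]; move: xy; rewrite e eqxx.
rewrite addrA; congr (_ + _); apply: eq_bigl => p.
by rewrite /rest andbA.
Qed.
End Split.

Theorem lemma4p7 (R : realType) (S : finType) (r : S -> S -> R)
  (r_ge0 : forall a b, 0 <= r a b) (r_diag : forall a, r a a = 0)
  (r_irr : irreducible_rates r)
  (d : nat -> R) (d_pos : forall N, 0 < d N) (d_lim : d @ \oo --> 0)
  (A : {set S}) (A_ne : A != finset.set0) (w : S) (wA : w \in A)
  (x y : S) (xy : x != y) (rxy : 0 < r x y + r y x) :
  exists C : R, 0 < C /\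
    forall (N i : nat), (1 <= i)%N -> (i <= N - 1)%N ->
      `| hitP r (d N) N A w (zeta N i x y)
         - r x y / (r x y + r y x) * hitP r (d N) N A w (zeta N i.+1 x y)
         - r y x / (r x y + r y x) * hitP r (d N) N A w (zeta N i.-1 x y) |
      <= C * (d N * N%:R / (i%:R * (N - i)%:R)).
Proof.
set a := r x y; set b := r y x.
set T := \sum_(p | @rest S x y p) r p.1 p.2.
have T0 : 0 <= T by apply: sumr_ge0 => p _.
have s0 : 0 < a + b := rxy.
exists ((a * b + a * T) / (a + b) ^+ 2 + (a * b + b * T) / (a + b) ^+ 2
      + T / (a + b) + 1).
split.
  have e2 : 0 < (a + b) ^+ 2 by apply: exprn_gt0.
  have a0 : 0 <= a := r_ge0 x y.
  have b0 : 0 <= b := r_ge0 y x.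
  have p1 : 0 <= (a * b + a * T) / (a + b) ^+ 2.
    by apply: divr_ge0; [apply: addr_ge0; apply: mulr_ge0|apply: ltW].
  have p2 : 0 <= (a * b + b * T) / (a + b) ^+ 2.
    by apply: divr_ge0; [apply: addr_ge0; apply: mulr_ge0|apply: ltW].
  have p3 : 0 <= T / (a + b) by apply: divr_ge0; [|apply: ltW].
  move: p1 p2 p3; move: (_ / (a + b) ^+ 2) (_ / (a + b) ^+ 2) (T / (a + b)) => *.
  lra.
move=> N i i1 iN.
have iN' : (i <= N)%N := leq_trans iN (leq_subr 1 N).
set dN := d N.
have dN0 : 0 < dN := d_pos N.
set eta := zeta N i x y.
have yx : y != x by rewrite eq_sym.
have ex : eta x = (N - i)%N by rewrite /eta ffunE eqxx.
have ey : eta y = i by rewrite /eta ffunE (negbTE yx) eqxx.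
have eo : forall z, z != x -> z != y -> eta z = 0%N.
  by move=> z zx zy; rewrite /eta ffunE (negbTE zx) (negbTE zy).
have Ni : (0 < N - i)%N by lia.
have sxy : sigma x y eta = zeta N i.+1 x y.
  rewrite /sigma ex Ni; apply/ffunP => z; rewrite !ffunE.
  case: (eqVneq z x) => [_|zx] /=; first by lia.
  by case: (eqVneq z y).
have syx : sigma y x eta = zeta N i.-1 x y.
  rewrite /sigma ey i1; apply/ffunP => z; rewrite !ffunE.
  case: (eqVneq z y) => [ezy|zy] /=.
    by rewrite ezy (negbTE yx).
  case: (eqVneq z x) => [_|zx] /=; first by lia.
  by [].
have nxi : forall z, eta != xi N z.
  move=> z; apply/negP => /eqP /ffunP E.
  have Ex := E x; rewrite !ffunE eqxx in Ex.
  by move: Ex; case: (x == z); lia.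
have nE : ~~ Defs.inE N A eta.
  by apply/existsP => -[z /andP [_ /eqP E]]; move: (nxi z); rewrite E eqxx.
have step := @hitP_step R S r dN N A w r_ge0 dN0 eta (nxi w) nE.
set H := hitP r dN N A w.
set L := lam r dN eta.
set Q := \sum_(p | @rest S x y p) rate r dN eta p.1 p.2.
set X := \sum_(p | @rest S x y p) (rate r dN eta p.1 p.2 / L * H (sigma p.1 p.2 eta)).
have R1E : rate r dN eta x y = (N - i)%:R * (dN + i%:R) * a by rewrite /rate ex ey.
have R2E : rate r dN eta y x = i%:R * (dN + (N - i)%:R) * b by rewrite /rate ex ey.
have LE : L = (N - i)%:R * (dN + i%:R) * a + i%:R * (dN + (N - i)%:R) * b + Q.
  by rewrite /L /lam (@split_pairs S x y R _ xy) R1E R2E.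
have hE : H eta = rate r dN eta x y / L * H (zeta N i.+1 x y)
                + rate r dN eta y x / L * H (zeta N i.-1 x y) + X.
  by rewrite /H step (@split_pairs S x y R _ xy) sxy syx.
have Q0 : 0 <= Q by apply: sumr_ge0 => p _; exact: (@rate_ge0 R S r dN r_ge0 dN0).
have etale : forall z, (eta z <= N)%N.
  move=> z; case: (eqVneq z x) => [->|zx]; first by rewrite ex leq_subr.
  case: (eqVneq z y) => [->|zy]; first by rewrite ey.
  by rewrite eo.
have QT : Q <= dN * N%:R * T.
  rewrite /T big_distrr /=; apply: ler_sum => -[u v] /=.
  rewrite /rest /= => /and3P [vu uxy uyx].
  rewrite /rate.
  case: (eqVneq u x) => [eux|ux].
    have vy : v != y by apply: contraNneq uxy => ->; rewrite eux.
    have vx : v != x by rewrite -eux.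
    rewrite (eo v vx vy) addr0 [dN * _]mulrC.
    apply: ler_wpM2r => //; apply: ler_wpM2r; first exact: ltW.
    by rewrite ler_nat.
  case: (eqVneq u y) => [euy|uy].
    have vx : v != x by apply: contraNneq uyx => ->; rewrite euy.
    have vy : v != y by rewrite -euy.
    rewrite (eo v vx vy) addr0 [dN * _]mulrC.
    apply: ler_wpM2r => //; apply: ler_wpM2r; first exact: ltW.
    by rewrite ler_nat.
  rewrite (eo u ux uy) !mul0r; apply: mulr_ge0 => //; apply: mulr_ge0 => //; exact: ltW.
have X0 : 0 <= X.
  apply: sumr_ge0 => p _; apply: mulr_ge0; first exact: (@coef_ge0 R S r dN r_ge0 dN0).
  by case/andP: (@hitP_bnd R S r dN N A w r_ge0 dN0 (sigma p.1 p.2 eta)).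
have XQ : X <= Q / L.
  rewrite /Q big_distrl /=; apply: ler_sum => p _.
  apply: ler_piMr; first exact: (@coef_ge0 R S r dN r_ge0 dN0).
  by case/andP: (@hitP_bnd R S r dN N A w r_ge0 dN0 (sigma p.1 p.2 eta)).
have NE : N%:R = (N - i)%:R + i%:R :> R by rewrite -natrD subnK.
rewrite NE.
rewrite -/H hE R1E R2E LE.
rewrite LE in XQ.
rewrite NE in QT.
apply: arith => //.
- exact: r_ge0.
- exact: r_ge0.
- by move: Ni; rewrite -(ler_nat R) mulr1n.
- by move: i1; rewrite -(ler_nat R) mulr1n.
- exact: (@hitP_bnd R S r dN N A w r_ge0 dN0).
- exact: (@hitP_bnd R S r dN N A w r_ge0 dN0).
Qed.
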